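(* Let $(X,S)$ be an association scheme with the trivial partition $S=\{\mathbf{1},\sigma\}$, where $\mathbf{1}=\{(x,x)\mid x\in X\}$ and $\sigma=(X\times X)\setminus\mathbf{1}$. If $\sharp X\geq3$, then the group $h\mathrm{aut}(\jmath(X,S))$ is isomorphic to the symmetric group on $\sharp X$ letters. If $\sharp X=2$, then $h\mathrm{aut}(\jmath(X,S))$ is trivial.
   Context: An association scheme is a pair $(X,S)$ with $X$ a finite set and $S$ a partition of $X\times X$ containing $\{(x,x)\mid x\in X\}$, closed under $g\mapsto g^*=\{(y,x)\mid(x,y)\in g\}$, such that for all $e,f,g\in S$ the number $\sharp\{y\in X\mid(x,y)\in e,(y,z)\in f\}$ is the same for all $(x,z)\in g$. The quasi-schemoid $\jmath(X,S)=(\mathcal{C},S)$ has $ob(\mathcal{C})=X$, $\mathrm{Hom}_{\mathcal{C}}(y,x)=\{(x,y)\}$, composition $(z,x)\circ(x,y)=(z,y)$, and partition $S$ of $mor(\mathcal{C})=X\times X$. A morphism of quasi-schemoids is a functor sending each block of the source partition into some block of the target partition. Product: $(\mathcal{C},S)\times(\mathcal{E},S')=(\mathcal{C}\times\mathcal{E},\{\sigma\times\tau\})$. $[1]$ has objects $0,1$ and one non-identity morphism $0\to1$; $I=([1],\{\{f\}\}_{f})$. A homotopy $H\colon F\Rightarrow G$ is a morphism $H\colon(\mathcal{C},S)\times I\to(\mathcal{D},S')$ with $H\circ\varepsilon_0=F$, $H\circ\varepsilon_1=G$ ($\varepsilon_i(a)=(a,i)$, $\varepsilon_i(f)=(f,1_i)$).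 $F\sim G$ means there is a homotopy $F\Rightarrow G$ or $G\Rightarrow F$; $F\simeq G$ means a finite chain $F=F_0\sim\cdots\sim F_n=G$; $\simeq$ is an equivalence relation compatible with composition. A self-homotopy equivalence of $A$ is a morphism $F\colon A\to A$ for which there is $G\colon A\to A$ with $FG\simeq1$ and $GF\simeq1$; $h\mathrm{aut}(A)$ is the group of $\simeq$-classes of self-homotopy equivalences of $A$ under composition. *)

(* Defs.v *)
From HB Require Import structures.
From mathcomp Require Import all_boot.
From Stdlib Require Import Relations.
Set Implicit Arguments. Unset Strict Implicit. Unset Printing Implicit Defensive.

Section Scheme.
Variable X : finType.

Definition diagX : {set X * X} := [set p | p.1 == p.2].
Definition transp (g : {set X * X}) : {set X * X} := [set p | (p.2, p.1) \in g].

Definition is_assoc_scheme (S : {set {set X * X}}) : Prop :=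
  [/\ partition S [set: X * X],
      diagX \in S,
      (forall g, g \in S -> transp g \in S) &
      (forall e f g, e \in S -> f \in S -> g \in S ->
         forall p q, p \in g -> q \in g ->
           #|[set y | ((p.1, y) \in e) && ((y, p.2) \in f)]| =
           #|[set y | ((q.1, y) \in e) && ((y, q.2) \in f)]|)].
End Scheme.

(* comp f g is "f o g", meaningful when dom f = cod g.                 *)
Record category := Category {
  ob : Type;
  mor : Type;
  dom : mor -> ob;
  cod : mor -> ob;
  idm : ob -> mor;
  comp : mor -> mor -> mor;
  dom_id : forall a, dom (idm a) = a;
  cod_id : forall a, cod (idm a) = a;
  dom_comp : forall f g, dom f = cod g -> dom (comp f g) = dom g;
  cod_comp : forall f g, dom f = cod g -> cod (comp f g) = cod f;
  comp_id_r : forall f, comp f (idm (dom f)) = f;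
  comp_id_l : forall f, comp (idm (cod f)) f = f;
  comp_assoc : forall f g h, dom f = cod g -> dom g = cod h ->
                 comp f (comp g h) = comp (comp f g) h
}.

Record functor (C D : category) := Functor {
  fo : ob C -> ob D;
  fm : mor C -> mor D;
  f_dom : forall m, dom (fm m) = fo (dom m);
  f_cod : forall m, cod (fm m) = fo (cod m);
  f_id : forall a, fm (idm a) = idm (fo a);
  f_comp : forall f g, dom f = cod g -> fm (comp f g) = comp (fm f) (fm g)
}.

Definition functor_id (C : category) : functor C C.
Proof.
refine (@Functor C C id id _ _ _ _); by [].
Defined.

Definition functor_comp (C D E : category) (G : functor D E) (F : functor C D) :
  functor C E.
Proof.
refine (@Functor C E (fun a => fo G (fo F a)) (fun m => fm G (fm F m)) _ _ _ _).
- by move=> m; rewrite f_dom f_dom.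
- by move=> m; rewrite f_cod f_cod.
- by move=> a; rewrite f_id f_id.
- move=> f g H; rewrite f_comp // f_comp //.
  by rewrite f_dom f_cod H.
Defined.

Definition functor_eq (C D : category) (F G : functor C D) : Prop :=
  (forall a, fo F a = fo G a) /\ (forall m, fm F m = fm G m).

Definition prod_cat (C E : category) : category.
Proof.
refine (@Category (ob C * ob E) (mor C * mor E)
   (fun m => (dom m.1, dom m.2)) (fun m => (cod m.1, cod m.2))
   (fun a => (idm a.1, idm a.2))
   (fun f g => (comp f.1 g.1, comp f.2 g.2)) _ _ _ _ _ _ _).
- by move=> [a b] /=; rewrite !dom_id.
- by move=> [a b] /=; rewrite !cod_id.
- by move=> [f1 f2] [g1 g2] /= [H1 H2]; rewrite !dom_comp.
- by move=> [f1 f2] [g1 g2] /= [H1 H2]; rewrite !cod_comp.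
- by move=> [f1 f2] /=; rewrite !comp_id_r.
- by move=> [f1 f2] /=; rewrite !comp_id_l.
- by move=> [f1 f2] [g1 g2] [h1 h2] /= [H1 H2] [K1 K2]; rewrite !comp_assoc.
Defined.

(* the category [1] : objects 0 (false), 1 (true), one arrow 0 -> 1 *)
Inductive mor1 := Id0 | Id1 | Arr01.

Definition dom1 (m : mor1) : bool := match m with Id0 => false | Id1 => true | Arr01 => false end.
Definition cod1 (m : mor1) : bool := match m with Id0 => false | Id1 => true | Arr01 => true end.
Definition id1 (b : bool) : mor1 := if b then Id1 else Id0.
Definition comp1 (f g : mor1) : mor1 :=
  match f with Id0 => g | Id1 => g | Arr01 => Arr01 end.

Definition cat1 : category.
Proof.
refine (@Category bool mor1 dom1 cod1 id1 comp1 _ _ _ _ _ _ _).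
- by case.
- by case.
- by case; case.
- by case; case.
- by case.
- by case.
- by case; case; case.
Defined.

(* indiscrete category on X: Hom(y,x) = {(x,y)}, (z,x) o (x,y) = (z,y) *)
Definition indisc_cat (X : Type) : category.
Proof.
refine (@Category X (X * X) (fun m => m.2) (fun m => m.1) (fun x => (x, x))
   (fun f g => (f.1, g.2)) _ _ _ _ _ _ _); try by [].
- by move=> [a b].
- by move=> [a b].
Defined.

(* Quasi-schemoids: a category together with a partition of its        *)
(* morphisms, given by the relation "lie in the same block".           *)
Record qschemoid := QSchemoid {
  qcat :> category;
  sameblk : mor qcat -> mor qcat -> Prop
}.

Record qmor (A B : qschemoid) := QMor {
  qfun :> functor A B;
  qfun_blk : forall m m', sameblk m m' -> sameblk (fm qfun m) (fm qfun m')
}.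

Definition qmor_id (A : qschemoid) : qmor A A.
Proof. by refine (@QMor A A (functor_id A) _). Defined.

Definition qmor_comp (A B C : qschemoid) (G : qmor B C) (F : qmor A B) : qmor A C.
Proof.
refine (@QMor A C (functor_comp G F) _).
by move=> m m' H /=; apply: qfun_blk; apply: qfun_blk.
Defined.

Definition qprod (A B : qschemoid) : qschemoid :=
  @QSchemoid (prod_cat A B)
    (fun m m' => sameblk (m.1 : mor A) m'.1 /\ sameblk (m.2 : mor B) m'.2).

Definition qI : qschemoid := @QSchemoid cat1 (fun m m' => m = m').

Definition jqs (X : finType) (S : {set {set X * X}}) : qschemoid :=
  @QSchemoid (indisc_cat X)
    (fun m m' => exists2 B, B \in S & (m \in B) && (m' \in B)).

Definition eps (C : category) (i : bool) : functor C (prod_cat C cat1).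
Proof.
refine (@Functor C (prod_cat C cat1) (fun a => (a, i)) (fun f => (f, id1 i)) _ _ _ _).
- by move=> m /=; case: i.
- by move=> m /=; case: i.
- by [].
- by move=> f g H /=; case: i.
Defined.

Definition homotopy (A B : qschemoid) (F G : qmor A B) (H : qmor (qprod A qI) B) : Prop :=
  functor_eq (functor_comp H (eps A false)) F /\
  functor_eq (functor_comp H (eps A true)) G.

Definition homotopic (A B : qschemoid) (F G : qmor A B) : Prop :=
  exists H, homotopy F G H.

Definition hsim (A B : qschemoid) (F G : qmor A B) : Prop :=
  homotopic F G \/ homotopic G F.

Definition hequiv (A B : qschemoid) : relation (qmor A B) :=
  clos_refl_trans (qmor A B) (@hsim A B).

Definition self_heq (A : qschemoid) (F : qmor A A) : Prop :=
  exists G : qmor A A,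
    hequiv (qmor_comp F G) (qmor_id A) /\ hequiv (qmor_comp G F) (qmor_id A).

(* Main.v *)
Require Import Defs.
From mathcomp Require Import all_boot all_fingroup.
From Stdlib Require Import Relations.
Set Implicit Arguments. Unset Strict Implicit. Unset Printing Implicit Defensive.

Lemma fmE (X : Type) (F : functor (indisc_cat X) (indisc_cat X)) (m : X * X) :
  fm F m = (fo F m.1, fo F m.2).
Proof.
have h1 := f_cod F m; have h2 := f_dom F m.
move: h1 h2; rewrite /=. case: (fm F m) => x y /= -> -> //.
Qed.

Lemma fmHE (X : Type) (H : functor (prod_cat (indisc_cat X) cat1) (indisc_cat X))
  (m : (X * X) * mor1) :
  fm H m = (fo H (m.1.1, cod1 m.2), fo H (m.1.2, dom1 m.2)).
Proof.
have h1 := f_cod H m; have h2 := f_dom H m.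
move: h1 h2; rewrite /=. case: (fm H m) => x y /= -> -> //.
Qed.

Lemma sameblkE (X : finType) (S : {set {set X * X}})
  (htriv : S = [set diagX X; ~: diagX X]) (m m' : X * X) :
  @sameblk (jqs S) m m' <-> ((m.1 == m.2) = (m'.1 == m'.2)).
Proof.
rewrite /=; split.
- case=> B; rewrite htriv !inE => /orP[]/eqP -> /andP[];
  rewrite !inE => H1 H2; first by rewrite H1 H2.
  by rewrite (negbTE H1) (negbTE H2).
- case E: (m.1 == m.2) => /esym E'.
  + exists (diagX X); first by rewrite htriv !inE eqxx.
    by rewrite !inE E E'.
  + exists (~: diagX X); first by rewrite htriv !inE eqxx orbT.
    by rewrite !inE E E'.
Qed.
Definition mkF (X : Type) (f : X -> X) : functor (indisc_cat X) (indisc_cat X).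
Proof.
refine (@Functor (indisc_cat X) (indisc_cat X) f (fun m => (f m.1, f m.2)) _ _ _ _);
  by [].
Defined.

Definition mkQ (X : finType) (S : {set {set X * X}})
  (htriv : S = [set diagX X; ~: diagX X]) (f : X -> X)
  (hf : forall a b a' b', (a == b) = (a' == b') -> (f a == f b) = (f a' == f b')) :
  qmor (jqs S) (jqs S).
Proof.
refine (@QMor (jqs S) (jqs S) (mkF f) _).
move=> m m' /(sameblkE htriv) E; apply/(sameblkE htriv) => /=.
exact: hf.
Defined.

Definition mkHf (X : Type) (h : X * bool -> X) :
  functor (prod_cat (indisc_cat X) cat1) (indisc_cat X).
Proof.
refine (@Functor (prod_cat (indisc_cat X) cat1) (indisc_cat X) h
  (fun m => (h (m.1.1, cod1 m.2), h (m.1.2, dom1 m.2))) _ _ _ _).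
- by [].
- by [].
- by move=> [a b]; case: b.
- move=> [f1 f2] [g1 g2] /= [E1 E2]; congr (_, _); congr (h (_, _)).
  + by move: E2; case: f2; case: g2.
  + by move: E2; case: f2; case: g2.
Defined.

Definition mkH (X : finType) (S : {set {set X * X}})
  (htriv : S = [set diagX X; ~: diagX X]) (h : X * bool -> X)
  (hb : forall t a b a' b', (a == b) = (a' == b') ->
      (h (a, cod1 t) == h (b, dom1 t)) = (h (a', cod1 t) == h (b', dom1 t))) :
  qmor (qprod (jqs S) qI) (jqs S).
Proof.
refine (@QMor (qprod (jqs S) qI) (jqs S) (mkHf h) _).
move=> [m1 t] [m1' t'] /= [/(sameblkE htriv) E Et]; subst t'.
apply/(sameblkE htriv) => /=.
exact: hb.
Defined.
Lemma qmor_blk (X : finType) (S : {set {set X * X}})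
  (htriv : S = [set diagX X; ~: diagX X]) (F : qmor (jqs S) (jqs S)) a b a' b' :
  (a == b) = (a' == b') -> (fo F a == fo F b) = (fo F a' == fo F b').
Proof.
move=> E.
have := @qfun_blk _ _ F (a, b) (a', b'); rewrite /=.
move=> /(_ (proj2 (sameblkE htriv (a, b) (a', b')) E)).
move/(sameblkE htriv); rewrite !fmE //.
Qed.

Lemma hequiv_step (A B : qschemoid) (F G : qmor A B) : homotopic F G -> hequiv F G.
Proof. by move=> h; apply: rt_step; left. Qed.

Lemma hequiv_sym (A B : qschemoid) (F G : qmor A B) : hequiv F G -> hequiv G F.
Proof.
elim=> [x y [h|h]| x | x y z _ IH1 _ IH2].
- by apply: rt_step; right.
- by apply: rt_step; left.
- exact: rt_refl.
- exact: rt_trans IH2 IH1.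
Qed.

Lemma sameH (X : finType) (S : {set {set X * X}})
  (htriv : S = [set diagX X; ~: diagX X]) (F G : qmor (jqs S) (jqs S)) :
  fo F =1 fo G -> hequiv F G.
Proof.
move=> FG; apply: hequiv_step.
pose h := fun p : X * bool => fo F p.1.
have hb : forall t a b a' b', (a == b) = (a' == b') ->
      (h (a, cod1 t) == h (b, dom1 t)) = (h (a', cod1 t) == h (b', dom1 t)).
  by move=> t a b a' b' E; rewrite /h /=; apply: qmor_blk.
exists (@mkH X S htriv h hb); split; split => /=.
- by [].
- by move=> m; rewrite fmE; case: m.
- by move=> a; rewrite /h /= FG.
- by move=> m; rewrite fmE /h /= !FG; case: m.
Qed.
Lemma homot_edge (X : finType) (S : {set {set X * X}})
  (htriv : S = [set diagX X; ~: diagX X]) (F G : qmor (jqs S) (jqs S)) H :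
  homotopy F G H -> forall a b a' b', a != b -> a' != b' ->
  (fo G a == fo F b) = (fo G a' == fo F b').
Proof.
case=> [[E0 _] [E1 _]] a b a' b' ab ab'.
have sb : @sameblk (qprod (jqs S) qI) ((a, b), Arr01) ((a', b'), Arr01).
  split=> //; apply/(sameblkE htriv) => /=.
  by rewrite (negbTE ab) (negbTE ab').
have := @qfun_blk _ _ H _ _ sb; move/(sameblkE htriv); rewrite !fmHE /=.
by rewrite -!E0 -!E1.
Qed.

Lemma three_distinct (X : finType) : 3 <= #|X| ->
  exists x y z : X, [/\ x != y, y != z & x != z].
Proof.
move=> h.
have i0 : 0 < #|X| by apply: leq_trans h.
have i1 : 1 < #|X| by apply: leq_trans h.
exists (enum_val (Ordinal i0)), (enum_val (Ordinal i1)), (enum_val (Ordinal h)).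
by split; apply/negP => /eqP/enum_val_inj.
Qed.

Lemma rigid (X : finType) (f g : X -> X) (finj : injective f) (x y z : X) :
  x != y -> y != z -> x != z ->
  (forall a b a' b', a != b -> a' != b' -> (g a == f b) = (g a' == f b')) ->
  g =1 f.
Proof.
move=> xy yz xz P.
have [f' _ ff'] := injF_bij finj.
case E: (g x == f y).
  have := P x z x y xz xy; rewrite E => /eqP; move/eqP: E => -> /finj zy.
  by rewrite zy eqxx in yz.
move=> a; case: (eqVneq a (f' (g a))) => [{2}->|ne]; first by rewrite ff'.
by have := P a (f' (g a)) x y ne xy; rewrite E ff' eqxx.
Qed.

Lemma hequiv_rigid (X : finType) (S : {set {set X * X}})
  (htriv : S = [set diagX X; ~: diagX X]) (h3 : 3 <= #|X|)
  (F G : qmor (jqs S) (jqs S)) :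
  hequiv F G -> injective (fo F) -> fo G =1 fo F.
Proof.
have [x [y [z [xy yz xz]]]] := three_distinct h3.
elim=> [F1 G1 [[H hH]|[H hH]] | F1 | F1 G1 K1 _ IH1 _ IH2] finj.
- exact: (rigid finj xy yz xz (homot_edge htriv hH)).
- apply: (rigid finj xy yz xz) => a b a' b' ab ab'.
  by rewrite ![fo G1 _ == _]eq_sym; apply: (homot_edge htriv hH); rewrite eq_sym.
- by [].
- have e1 := IH1 finj.
  have e2 := IH2 (eq_inj finj (fun x => esym (e1 x))).
  by move=> a; rewrite e2 e1.
Qed.
Lemma three_col (X : finType) (x y z : X) : #|X| = 2 ->
  x != y -> y != z -> x != z -> False.
Proof.
move=> h xy yz xz.
have : #|z |: [set x; y]| <= #|X| := max_card _.
rewrite h cardsU1 cards2 !inE negb_or xy ![z == _]eq_sym xz yz //.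
Qed.

Lemma two_elems (X : finType) : #|X| = 2 -> exists u v : X, u != v.
Proof.
move=> h.
have i0 : 0 < #|X| by rewrite h.
have i1 : 1 < #|X| by rewrite h.
exists (enum_val (Ordinal i0)), (enum_val (Ordinal i1)).
by apply/negP => /eqP/enum_val_inj.
Qed.

Lemma elem2 (X : finType) (u v : X) : #|X| = 2 -> u != v ->
  forall a, a = u \/ a = v.
Proof.
move=> h uv a; case: (eqVneq a u) => [->|au]; first by left.
case: (eqVneq a v) => [->|av]; first by right.
by exfalso; apply: (three_col h (_ : u != a) av uv); rewrite eq_sym.
Qed.

Lemma const2 (X : finType) (g : X -> X) (c u v : X) : #|X| = 2 -> u != v ->
  (g u == c) = (g v == c) -> forall a b, g a = g b.
Proof.
move=> h uv E.
have guv : g u = g v.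
  case E1: (g u == c); move: E; rewrite E1 => /esym E2.
    by rewrite (eqP E1) (eqP E2).
  apply/eqP; apply/negPn/negP => ne.
  apply: (three_col h (_ : g u != c) (_ : c != g v) ne).
  - by rewrite E1.
  - by rewrite eq_sym E2.
move=> a b.
by case: (elem2 h uv a) => ->; case: (elem2 h uv b) => ->.
Qed.

Lemma hequiv_const (X : finType) (S : {set {set X * X}})
  (htriv : S = [set diagX X; ~: diagX X]) (h2 : #|X| = 2)
  (F G : qmor (jqs S) (jqs S)) :
  hequiv F G -> (forall a b, fo F a = fo F b) -> forall a b, fo G a = fo G b.
Proof.
have [u [v uv]] := two_elems h2.
have vu : v != u by rewrite eq_sym.
elim=> [F1 G1 [[H hH]|[H hH]] | F1 | F1 G1 K1 _ IH1 _ IH2] fc.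
- apply: (const2 (c := fo F1 u) h2 uv).
  by rewrite -{1}(fc v u) (homot_edge htriv hH uv vu).
- apply: (const2 (c := fo F1 u) h2 uv).
  rewrite ![_ == fo F1 u]eq_sym.
  by rewrite -{1}(fc v u) (homot_edge htriv hH vu uv).
- by [].
- exact: IH2 (IH1 fc).
Qed.

Lemma fix_dich (X : finType) (f : X -> X) : #|X| = 2 -> injective f ->
  (forall x, f x = x) \/ (forall a b, (a == f b) = (a != b)).
Proof.
move=> h finj.
case: (boolP [forall x, f x == x]) => [/forallP A|/forallPn [x nx]].
  by left => x; apply/eqP.
right.
have nfix : forall b, f b != b.
  move=> b; apply/negP => /eqP fb.
  case: (eqVneq b x) => [bx|bx]; first by rewrite -bx fb eqxx in nx.
  have h1 : x != b by rewrite eq_sym.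
  have h2 : b != f x by rewrite -{1}fb (inj_eq finj) eq_sym.
  have h3 : x != f x by rewrite eq_sym.
  exact: (three_col h h1 h2 h3).
move=> a b; case: (eqVneq a b) => [->|ab]; first by rewrite eq_sym (negbTE (nfix b)).
suff -> : a == f b by []. apply/negPn/negP => ne.
have h2 : b != f b by rewrite eq_sym.
exact: (three_col h ab h2 ne).
Qed.
Theorem theorem4p4 (X : finType) (S : {set {set X * X}})
  (hS : is_assoc_scheme S) (htriv : S = [set diagX X; ~: diagX X]) :
  (3 <= #|X| ->
     exists Phi : {perm X} -> qmor (jqs S) (jqs S),
       [/\ forall p, self_heq (Phi p),
           forall p q, hequiv (Phi (p * q)%g) (qmor_comp (Phi p) (Phi q)),
           forall p q, hequiv (Phi p) (Phi q) -> p = q &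
           forall F, self_heq F -> exists p, hequiv F (Phi p)]) /\
  (#|X| = 2 -> forall F, self_heq F -> hequiv F (qmor_id (jqs S))).
Proof.
split.
  move=> h3.
  have pinj : forall p : {perm X}, forall a b a' b', (a == b) = (a' == b') ->
      ((fun x => (p^-1)%g x) a == (fun x => (p^-1)%g x) b) =
      ((fun x => (p^-1)%g x) a' == (fun x => (p^-1)%g x) b').
    by move=> p a b a' b' E; rewrite /= !(inj_eq perm_inj).
  exists (fun p : {perm X} => @mkQ X S htriv (fun x => (p^-1)%g x) (pinj p)); split.
  - move=> p; exists (@mkQ X S htriv _ (pinj p^-1)%g).
    by split; apply: (sameH htriv) => x /=; rewrite ?invgK ?permK ?permKV.
  - by move=> p q; apply: (sameH htriv) => x /=; rewrite invMg permM.
  - move=> p q /(hequiv_rigid htriv h3) /= e.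
    have := e perm_inj => {}e.
    by apply: invg_inj; apply/permP => x; rewrite e.
  - move=> F [G [_ hGF]].
    have e := hequiv_rigid htriv h3 (hequiv_sym hGF) (fun x y (E : x = y) => E).
    have finj : injective (fo F) by apply: (can_inj (g := fo G)) => x; apply: e.
    exists ((perm finj)^-1)%g; apply: (sameH htriv) => x /=.
    by rewrite invgK permE.
move=> h2 F [G [_ hGF]].
have [u [v uv]] := two_elems h2.
have finj : injective (fo F).
  case: (boolP (fo F u == fo F v)) => E.
    have fc : forall a b, fo F a = fo F b.
      move=> a b.
      by case: (elem2 h2 uv a) => ->; case: (elem2 h2 uv b) => ->; rewrite ?(eqP E).
    have := hequiv_const htriv h2 hGF (fun a b => congr1 (fo G) (fc a b)) u v.
    by move=> /= /eqP; rewrite (negbTE uv).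
  move=> a b.
  case: (elem2 h2 uv a) => ->; case: (elem2 h2 uv b) => -> // fe.
  - by rewrite fe eqxx in E.
  - by rewrite fe eqxx in E.
pose h := fun p : X * bool => if p.2 then p.1 else fo F p.1.
have hb : forall t a b a' b', (a == b) = (a' == b') ->
      (h (a, cod1 t) == h (b, dom1 t)) = (h (a', cod1 t) == h (b', dom1 t)).
  move=> t a b a' b' E; case: t; rewrite /h /=.
  - by rewrite !(inj_eq finj) E.
  - by [].
  - case: (fix_dich h2 finj) => D; first by rewrite !D E.
    by rewrite !D E.
apply: hequiv_step; exists (@mkH X S htriv h hb); split; split => /=.
- by [].
- by move=> m; rewrite fmE; case: m.
- by [].
- by case.
Qed.
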